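(* Let $V=\{v_1,\dots,v_n\}$ be the cities of a symmetric TSP instance on the complete graph $K_n$ with nonnegative edge weights $w$. Let $I$ (white edges) and $X$ (excluded edges) be disjoint sets of edges, and let $g$ be a Hamiltonian cycle on $V$ that contains every edge of $I$ and no edge of $X$. Then the weight of the constrained MST with respect to $(I,X)$ is at most the weight $w(g)=\sum_{e\in g}w(e)$.
   Context: The constrained MST with respect to $(I,X)$ is the spanning tree of $\{v_2,\dots,v_n\}$ produced by Prim's algorithm on the complete graph on $\{v_2,\dots,v_n\}$ in which all edges of $X$ are discarded and any edge of $I$ crossing the current cut is given the highest priority (selected before any edge not in $I$), the remaining candidate edges being ranked by weight. Its weight is the sum of the weights of its edges. In the paper's setting, $I$ and $X$ are the white and excluded edges of a Stem-and-Cycle configuration $c$ in an ejection chain, and $g$ is the goal tour toward which these constraints lead, which therefore contains all of $I$ and none of $X$. *)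

(* Defs.v *)
From HB Require Import structures.
From mathcomp Require Import all_boot all_order all_algebra.
Set Implicit Arguments. Unset Strict Implicit. Unset Printing Implicit Defensive.
Import Order.TTheory GRing.Theory Num.Theory.
Local Open Scope ring_scope.

Definition is_edge (T : finType) (e : {set T}) : bool := #|e| == 2%N.

Definition cycle_edges (T : finType) (s : seq T) : {set {set T}} :=
  [set [set x; next s x] | x in s].

Definition hamiltonian_cycle (T : finType) (g : {set {set T}}) : Prop :=
  (3 <= #|T|)%N /\
  exists s : seq T, [/\ uniq s, (forall x : T, x \in s) & g = cycle_edges s].

(* Vertex set of the constrained MST: all cities except v1. *)
Definition Uset (T : finType) (v1 : T) : {set T} := [set: T] :\ v1.

Definition prim_cand (T : finType) (v1 : T) (X : {set {set T}})
  (S : {set T}) (e : {set T}) : bool :=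
  [&& is_edge e, e \subset Uset v1, e \notin X & #|e :&: S| == 1%N].

(* e is a legal choice of Prim's algorithm at cut S: it is a candidate,
   every I-edge crossing the cut has priority over non-I edges, and a
   non-I edge is chosen of minimum weight among the candidates.
   (Ties are broken arbitrarily.) *)
Definition prim_choice (T : finType) (R : realDomainType) (w : {set T} -> R)
  (v1 : T) (I X : {set {set T}}) (S : {set T}) (e : {set T}) : Prop :=
  prim_cand v1 X S e /\
  forall f, prim_cand v1 X S f ->
    (f \in I -> e \in I) /\ (e \notin I -> w e <= w f).

Definition prim_reached (T : finType) (r : T) (es : seq {set T}) (k : nat)
  : {set T} := r |: \bigcup_(e <- take k es) e.

Definition prim_run (T : finType) (R : realDomainType) (w : {set T} -> R)
  (v1 : T) (I X : {set {set T}}) (r : T) (es : seq {set T}) : Prop :=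
  [/\ r \in Uset v1,
      (forall k, (k < size es)%N ->
         prim_choice w v1 I X (prim_reached r es k) (nth set0 es k))
    & prim_reached r es (size es) = Uset v1].

Definition tree_weight (T : finType) (R : realDomainType) (w : {set T} -> R)
  (es : seq {set T}) : R := \sum_(e <- es) w e.

(* Main.v *)
Require Import Defs.
From HB Require Import structures.
From mathcomp Require Import all_boot all_order all_algebra.
Import Order.TTheory GRing.Theory Num.Theory.
Set Implicit Arguments. Unset Strict Implicit. Unset Printing Implicit Defensive.
Local Open Scope ring_scope.

Inductive reach (T : finType) (Q : {set {set T}}) (A : {set T}) : T -> Prop :=
| reach0 x : x \in A -> reach Q A x
| reach1 x y : [set x; y] \in Q -> reach Q A y -> reach Q A x.

Lemma reach_trans (T : finType) (Q : {set {set T}}) (A B : {set T}) x :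
  reach Q A x -> (forall y, y \in A -> reach Q B y) -> reach Q B x.
Proof.
move=> H HB; elim: H => [z zA|z y zy _ IH]; first exact: HB.
exact: reach1 zy IH.
Qed.

Lemma reach_sym (T : finType) (Q : {set {set T}}) x y :
  reach Q [set y] x -> reach Q [set x] y.
Proof.
elim=> [z|z t zt _ IH]; first by rewrite inE => /eqP ->; apply: reach0; rewrite inE.
apply: (reach_trans IH) => u; rewrite inE => /eqP ->.
by apply: (@reach1 _ _ _ t z); [rewrite setUC | apply: reach0; rewrite inE].
Qed.

Lemma reach_cut (T : finType) (Q : {set {set T}}) (S : {set T}) a b x :
  b \in S -> reach Q S x -> reach (Q :\ [set a; b]) (a |: S) x.
Proof.
move=> bS; elim=> [z zS|z y zy _ IH]; first by apply: reach0; rewrite inE zS orbT.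
case zin: (z \in a |: S); first exact: reach0.
apply: (reach1 _ IH); rewrite in_setD1 zy andbT; apply/eqP => E.
move: zin; have : z \in [set a; b] by rewrite -E !inE eqxx.
rewrite !inE => /orP[/eqP->|/eqP->]; first by rewrite eqxx.
by rewrite bS orbT.
Qed.

Lemma reach_exit (T : finType) (Q : {set {set T}}) (S : {set T}) v :
  reach Q S v -> v \notin S -> exists a b, [/\ a \notin S, b \in S,
    [set a; b] \in Q & reach (Q :\ [set a; b]) [set v] a].
Proof.
elim=> [z zS|z y zy _ IH] zS'; first by rewrite zS in zS'.
case yS: (y \in S).
  by exists z, y; split => //; apply: reach0; rewrite inE.
have [a [b [aS bS ab Ra]]] := IH (negbT yS).
exists a, b; split => //; apply: (reach_trans Ra) => u; rewrite inE => /eqP ->.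
apply: (@reach1 _ _ _ y z); last by apply: reach0; rewrite inE.
rewrite in_setD1 setUC zy andbT; apply/eqP => E.
have : b \in [set z; y] by rewrite E !inE eqxx orbT.
rewrite !inE => /orP[/eqP Eb|/eqP Eb]; first by rewrite -Eb bS in zS'.
by rewrite -Eb bS in yS.
Qed.

Lemma edge_cut (T : finType) (e S : {set T}) :
  is_edge e -> #|e :&: S| == 1%N ->
  exists u v, [/\ u \in S, v \notin S & e = [set u; v]].
Proof.
move=> /cards2P [x [y [xy ->]]] H.
case xS: (x \in S); case yS: (y \in S).
- suff E : [set x; y] :&: S = [set x; y] by move: H; rewrite E cards2 xy.
  apply/setIidPl/subsetP => z; rewrite !inE => /orP[/eqP->|/eqP->] //.
- by exists x, y; rewrite yS.
- by exists y, x; rewrite xS setUC.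
- suff E : [set x; y] :&: S = set0 by move: H; rewrite E cards0.
  apply/setP => z; rewrite !inE; case: (z =P x) => [->|_]; first by rewrite xS.
  by case: (z =P y) => [->|_]; rewrite ?yS.
Qed.

Section Main.
Variables (R : realDomainType) (T : finType) (v1 : T) (w : {set T} -> R)
  (I X : {set {set T}}).
Hypothesis w_ge0 : forall e : {set T}, is_edge e -> 0 <= w e.

Definition run' (S : {set T}) (es : seq {set T}) : Prop :=
  forall k, (k < size es)%N ->
    prim_choice w v1 I X (S :|: \bigcup_(e <- take k es) e) (nth set0 es k).

Lemma run'_cons S e es :
  run' S (e :: es) <-> prim_choice w v1 I X S e /\ run' (S :|: e) es.
Proof.
split.
  move=> H; split; first by have := H 0%N isT; rewrite big_nil setU0.
  by move=> k ks; have := H k.+1 ks; rewrite /= big_cons setUA.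
case=> H0 H [|k] /= ks; first by rewrite big_nil setU0.
by rewrite big_cons setUA; apply: H.
Qed.

Let U := Uset v1.

Lemma weight_ind es : forall (S : {set T}) (Q : {set {set T}}),
  run' S es ->
  (forall f, f \in Q -> [&& is_edge f, f \subset U & f \notin X]) ->
  (forall e, e \in I -> e \subset U -> ~~ (e \subset S) -> e \in Q) ->
  (forall x, x \in U -> reach Q S x) ->
  \sum_(e <- es) w e <= \sum_(f in Q) w f.
Proof.
elim: es => [|e es IH] S Q Hrun HQ HI Hreach.
  rewrite big_nil; apply: sumr_ge0 => f /HQ /andP[Ef _]; exact: w_ge0.
move/run'_cons: Hrun => [[Hc Hch] Hrun].
have Hc' := Hc; case/and4P: Hc' => Ee eU eX eS.
have [u [v [uS vS Euv]]] := edge_cut Ee eS.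
have vU : v \in U by apply: (subsetP eU); rewrite Euv !inE eqxx orbT.
have vSe : v \in S :|: e by rewrite inE Euv !inE eqxx !orbT.
rewrite big_cons.
case eI: (e \in I).
  have eQ : e \in Q.
    apply: HI => //; apply/negP => /subsetP /(_ v); rewrite Euv !inE eqxx orbT.
    by move=> /(_ isT); rewrite (negbTE vS).
  rewrite (bigD1 e eQ) /= lerD2l.
  have -> : \sum_(i in Q | i != e) w i = \sum_(i in Q :\ e) w i.
    by apply: eq_bigl => i; rewrite in_setD1 andbC.
  apply: (IH (S :|: e)) => //.
  - by move=> f; rewrite in_setD1 => /andP[_ /HQ].
  - move=> f fI fU fS; rewrite in_setD1 HI //.
      rewrite andbT; apply/eqP => fe; move: fS; rewrite fe.
      by rewrite subsetUr.
    by apply: contra fS => /subset_trans; apply; rewrite subsetUl.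
  - move=> x /Hreach Rx; have := reach_cut v uS Rx; have -> : [set v; u] = e by rewrite Euv setUC.
    move=> Rx'.
    apply: (reach_trans Rx') => y; rewrite !inE => /orP[/eqP->|yS].
      exact: reach0.
    by apply: reach0; rewrite inE yS.
have [a [b [aS bS abQ Ra]]] := reach_exit (Hreach v vU) vS.
set f := [set a; b] in abQ Ra.
have /and3P [Ef fU fX] := HQ f abQ.
have fc : prim_cand v1 X S f.
  apply/and4P; split => //; apply/eqP.
  suff -> : f :&: S = [set b] by rewrite cards1.
  apply/setP => z; rewrite !inE; case: (z =P a) => [->|_] /=.
    by rewrite (negbTE aS); apply/esym/negbTE; apply: contraNneq aS => ->.
  by case: (z =P b) => [->|_] //=; rewrite andbF.
have [fI wef] := Hch f fc.
have fI' : f \notin I by apply/negP => /fI; rewrite eI.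
have := wef (negbT eI) => {}wef.
rewrite (bigD1 f abQ) /=; apply: lerD => //.
have -> : \sum_(i in Q | i != f) w i = \sum_(i in Q :\ f) w i.
  by apply: eq_bigl => i; rewrite in_setD1 andbC.
apply: (IH (S :|: e)) => //.
- by move=> h; rewrite in_setD1 => /andP[_ /HQ].
- move=> h hI hU hS; rewrite in_setD1 HI //.
    by rewrite andbT; apply/eqP => hf; rewrite -hf hI in fI'.
  by apply: contra hS => /subset_trans; apply; rewrite subsetUl.
- move=> x /Hreach Rx; have := reach_cut a bS Rx => Rx'.
  apply: (reach_trans Rx') => y; rewrite !inE => /orP[/eqP->|yS].
    apply: (reach_trans Ra) => z; rewrite inE => /eqP ->; exact: reach0.
  by apply: reach0; rewrite inE yS.
Qed.

End Main.

Section Exist.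
Variables (R : realDomainType) (T : finType) (v1 : T) (w : {set T} -> R)
  (I X : {set {set T}}) (Q : {set {set T}}).
Let U := Uset v1.
Hypothesis HQ : forall f, f \in Q -> [&& is_edge f, f \subset U & f \notin X].

Lemma exist_run n : forall S : {set T}, (#|U :\: S| <= n)%N -> S \subset U ->
  (forall x, x \in U -> reach Q S x) ->
  exists es, run' v1 w I X S es /\ S :|: \bigcup_(e <- es) e = U.
Proof.
elim: n => [|n IH] S Hn SU Hr; case: (set_0Vmem (U :\: S)) => [E|[v vUS]].
- exists [::]; split; first by [].
  rewrite big_nil setU0; apply/eqP; rewrite eqEsubset SU /=.
  by rewrite -setD_eq0 E.
- by move: Hn; rewrite leqn0 cards_eq0 => /eqP E; rewrite E inE in vUS.
- exists [::]; split; first by [].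
  rewrite big_nil setU0; apply/eqP; rewrite eqEsubset SU /=.
  by rewrite -setD_eq0 E.
move: vUS; rewrite inE => /andP[vS vU].
have [a [b [aS bS abQ _]]] := reach_exit (Hr v vU) vS.
have /and3P [Ef fU fX] := HQ abQ.
have fc : prim_cand v1 X S [set a; b].
  apply/and4P; split => //; apply/eqP.
  suff -> : [set a; b] :&: S = [set b] by rewrite cards1.
  apply/setP => z; rewrite !inE; case: (z =P a) => [->|_] /=.
    by rewrite (negbTE aS); apply/esym/negbTE; apply: contraNneq aS => ->.
  by case: (z =P b) => [->|_] //=; rewrite andbF.
have [e Hch] : exists e, prim_choice w v1 I X S e.
  case: (pickP (fun f => prim_cand v1 X S f && (f \in I))) => [e /andP[ec eI]|none].
    by exists e; split => // f _; split => //; rewrite eI.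
  case: (arg_minP w fc) => e ec emin.
  exists e; split => // f fc'; split.
    by move=> fI; have := none f; rewrite fc' fI.
  by move=> _; apply: emin.
have [Hc _] := Hch.
case/and4P: Hc => Ee eU eX eS.
have [u [v' [uS vS' Euv]]] := edge_cut Ee eS.
have [es [Hrun Hfin]] : exists es, run' v1 w I X (S :|: e) es /\
    (S :|: e) :|: \bigcup_(e <- es) e = U.
  apply: IH.
  - rewrite -ltnS; apply: leq_trans Hn; apply: proper_card.
    rewrite properE; apply/andP; split.
      by apply: setDS; rewrite subsetUl.
    apply/subsetPn; exists v'.
      by rewrite in_setD vS' /=; apply: (subsetP eU); rewrite Euv !inE eqxx orbT.
    by rewrite !inE Euv !inE eqxx !orbT.
  - by rewrite subUset SU.
  - move=> x /Hr Rx; apply: (reach_trans Rx) => y yS; apply: reach0.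
    by rewrite inE yS.
exists (e :: es); split; first by apply/run'_cons.
by rewrite big_cons setUA.
Qed.

End Exist.

Lemma next_cons_ne (T : eqType) (v1 x : T) (p : seq T) :
  uniq (v1 :: p) -> (0 < size p)%N -> x \in v1 :: p -> next (v1 :: p) x != x.
Proof.
move=> us sp xs; have /andP[v1p up] := us; rewrite next_nth xs /=.
case: (x =P v1) => [->|/eqP xv1] /=.
  rewrite eqxx; case: p v1p sp {us up xs} => [|y p] //=; rewrite inE negb_or => /andP[yv _] _.
  by rewrite eq_sym.
move: xs; rewrite in_cons (negbTE xv1) /= => xp.
rewrite (eq_sym v1 x) (negbTE xv1).
have jp : (index x p < size p)%N by rewrite index_mem.
case: (ltnP (index x p).+1 (size p)) => H.
  rewrite -{2}(nth_index v1 xp) nth_uniq //.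
  by rewrite eqn_leq ltnn.
by rewrite nth_default //; apply: contraNneq v1p => ->.
Qed.

Lemma next_cons_nth (T : eqType) (v1 : T) (p : seq T) j :
  uniq (v1 :: p) -> (j.+1 < size p)%N ->
  next (v1 :: p) (nth v1 p j) = nth v1 p j.+1.
Proof.
move=> us jp; have /andP[v1p up] := us.
have jp' : (j < size p)%N by apply: ltnW.
have xp : nth v1 p j \in p by apply: mem_nth.
rewrite next_nth inE xp orbT /=.
have -> : (v1 == nth v1 p j) = false.
  by apply/negbTE; apply: contraNneq v1p => ->.
by rewrite index_uniq.
Qed.

Theorem lemma2 (R : realDomainType) (T : finType) (v1 : T)
  (w : {set T} -> R) (I X g : {set {set T}}) :
  (forall e : {set T}, is_edge e -> 0 <= w e) ->
  (forall e, e \in I -> is_edge e) ->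
  (forall e, e \in X -> is_edge e) ->
  [disjoint I & X] ->
  hamiltonian_cycle g ->
  I \subset g ->
  [disjoint g & X] ->
  (exists r es, prim_run w v1 I X r es) /\
  (forall r es, prim_run w v1 I X r es ->
     tree_weight w es <= \sum_(e in g) w e).
Proof.
move=> w_ge0 _ _ _ [card3 [s [us alls gE]]] Ig gX.
case: (rot_to (alls v1)) => i p Hrot.
have us' : uniq (v1 :: p) by rewrite -Hrot rot_uniq.
have Hnext : forall x, next s x = next (v1 :: p) x.
  by move=> x; rewrite -Hrot next_rot.
have sp : (2 <= size p)%N.
  have : (#|T| <= size s)%N.
    rewrite -(@eq_card _ (mem s)); first exact: card_size.
    by move=> x; rewrite !inE alls.
  by rewrite -(size_rot i) Hrot /=; move: card3; apply: leq_trans.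
have v1p : v1 \notin p by case/andP: us'.
have memU : forall x, (x \in Uset v1) = (x \in p).
  move=> x; rewrite /Uset !inE andbT.
  have : x \in v1 :: p by rewrite -Hrot mem_rot alls.
  rewrite inE; case: (x =P v1) => [->|] //= _; by rewrite (negbTE v1p).
have gedge : forall f, f \in g -> is_edge f.
  move=> f; rewrite gE => /imsetP [x xs ->].
  rewrite /is_edge cards2 (eq_sym x) Hnext next_cons_ne //.
    by apply: leq_trans sp.
  by rewrite -Hrot mem_rot.
set Q := [set f in g | f \subset Uset v1].
have HQ : forall f, f \in Q -> [&& is_edge f, f \subset Uset v1 & f \notin X].
  move=> f; rewrite inE => /andP[fg fU]; rewrite gedge //= fU /=.
  by rewrite (disjointFr gX fg).
have conn : forall j, (j < size p)%N -> reach Q [set nth v1 p 0] (nth v1 p j).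
  elim=> [|j IH] jp; first by apply: reach0; rewrite inE.
  apply: (@reach1 _ _ _ _ (nth v1 p j)); last by apply: IH; apply: ltnW.
  rewrite inE; apply/andP; split.
    rewrite setUC gE -next_cons_nth // -Hnext; apply: imset_f; exact: alls.
  apply/subsetP => z; rewrite memU !inE => /orP[/eqP->|/eqP->].
    exact: mem_nth.
  by apply: mem_nth; apply: ltnW.
have reachall : forall r x, r \in Uset v1 -> x \in Uset v1 -> reach Q [set r] x.
  move=> r x; rewrite !memU => rp xp.
  have Rx : reach Q [set nth v1 p 0] x.
    by rewrite -(nth_index v1 xp); apply: conn; rewrite index_mem.
  have Rr : reach Q [set nth v1 p 0] r.
    by rewrite -(nth_index v1 rp); apply: conn; rewrite index_mem.
  apply: (reach_trans Rx) => y; rewrite inE => /eqP ->; exact: reach_sym.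
have p0U : nth v1 p 0 \in Uset v1 by rewrite memU mem_nth //; apply: leq_trans sp.
split.
  have S0U : [set nth v1 p 0] \subset Uset v1 by rewrite sub1set.
  have [es [Hrun Hfin]] := exist_run w I HQ (leqnn _) S0U
    (fun x xU => reachall _ x p0U xU).
  exists (nth v1 p 0), es; split => //.
  by rewrite /prim_reached take_size.
move=> r es [rU Hrun _].
rewrite /tree_weight.
apply: (@le_trans _ _ (\sum_(f in Q) w f)).
  apply: (@weight_ind _ _ v1 w I X w_ge0 es [set r] Q Hrun) => //.
  - move=> e eI eU _; rewrite inE eU andbT; exact: (subsetP Ig).
  - by move=> x; apply: reachall.
rewrite [X in _ <= X](bigID (fun f : {set T} => f \subset Uset v1)) /=.
have -> : \sum_(f in Q) w f = \sum_(f in g | f \subset Uset v1) w f.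
  by apply: eq_bigl => f; rewrite inE.
rewrite lerDl; apply: sumr_ge0 => f /andP[fg _]; exact: w_ge0 (gedge f fg).
Qed.
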